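(* Let $\beta>0$ and let $g=\phi^2 g_{flat}$ be an $H_\beta$-invariant Riemannian metric on the flat Klein bottle $K_\beta$ such that $\mathrm{sys}(K_\beta,g)=\pi$. Then, viewing $\phi$ and $\phi_\beta$ as functions of $y\in[0,\beta]$, $$\int_0^\beta\phi(y)\phi_\beta(y)\,dy\ge\int_0^\beta\phi_\beta^2(y)\,dy.$$
   Context: For $\beta>0$ let $\Gamma_\beta$ be the group of isometries of the Euclidean plane generated by $A(x,y)=(x+\pi,-y)$ and $B(x,y)=(x,y+4\beta)$; $K_\beta=\mathbb{R}^2/\Gamma_\beta$ with the induced flat metric $g_{flat}$; functions on $K_\beta$ are identified with $\Gamma_\beta$-invariant functions on $\mathbb{R}^2$. $H_\beta=\mathrm{Isom}(K_\beta,g_{flat})$; a function $\phi$ is $H_\beta$-invariant precisely when it is independent of $x$ and $\phi(y)=\phi(-y)=\phi(y+2\beta)$, so it is determined by its restriction to $[0,\beta]$, and any function on $[0,\beta]$ extends by these rules to a continuous function on $K_\beta$. Let $\phi_0(y)=\frac{2e^y}{1+e^{2y}}$, $\beta_0=\log(1+\sqrt2)$, $\beta_1=\log(2+\sqrt3)$. Define $\phi_\beta$ on $[0,\beta]$: if $\beta\le\pi/4$, $\phi_\beta\equiv\frac{\pi}{4\beta}$; if $\pi/4<\beta<\beta_0$, $\phi_\beta(y)=\phi_0(y)$ for $y\le s_\beta$ and $\phi_0(s_\beta)$ for $y>s_\beta$, where $s_\beta$ is the unique $s\in(0,\beta)$ with $\int_0^s\phi_0(y)dy+(\beta-s)\phi_0(s)=\pi/4$;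 if $\beta_0\le\beta\le\beta_1$, $\phi_\beta=\phi_0$; if $\beta>\beta_1$, $\phi_\beta(y)=\phi_0(y)$ for $y\le\beta_1$ and $\frac12$ for $y>\beta_1$. $\mathrm{sys}(K_\beta,g)$ is the infimum of $g$-lengths of noncontractible closed curves in $K_\beta$. *)

(* Defs.v *)
From Stdlib Require Import Reals Lra ClassicalEpsilon.
From Coquelicot Require Import Coquelicot.
Open Scope R_scope.

Definition pt := (R * R)%type.

Definition genA (p : pt) : pt := (fst p + PI, - snd p).
Definition genAinv (p : pt) : pt := (fst p - PI, - snd p).
Definition genB (beta : R) (p : pt) : pt := (fst p, snd p + 4 * beta).
Definition genBinv (beta : R) (p : pt) : pt := (fst p, snd p - 4 * beta).

Inductive in_Gamma (beta : R) : (pt -> pt) -> Prop :=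
| Gamma_id : in_Gamma beta (fun p => p)
| Gamma_A : forall h, in_Gamma beta h -> in_Gamma beta (fun p => genA (h p))
| Gamma_Ainv : forall h, in_Gamma beta h -> in_Gamma beta (fun p => genAinv (h p))
| Gamma_B : forall h, in_Gamma beta h -> in_Gamma beta (fun p => genB beta (h p))
| Gamma_Binv : forall h, in_Gamma beta h -> in_Gamma beta (fun p => genBinv beta (h p)).

Definition C1_curve (cx cy : R -> R) : Prop :=
  forall t, ex_derive cx t /\ ex_derive cy t /\
            continuous (Derive cx) t /\ continuous (Derive cy) t.

Definition conf_length (phi : R -> R) (cx cy : R -> R) : R :=
  RInt (fun t => phi (cy t) * sqrt ((Derive cx t) ^ 2 + (Derive cy t) ^ 2)) 0 1.

(* Noncontractible closed curves in K_beta = lifts to R^2 of the form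
   a path from p to h p with h in Gamma_beta, h <> id (covering theory,
   since R^2 is simply connected and Gamma_beta acts freely). *)
Definition noncontractible_lift (beta : R) (cx cy : R -> R) : Prop :=
  C1_curve cx cy /\
  exists h : pt -> pt, in_Gamma beta h /\ (exists q, h q <> q) /\
    (cx 1, cy 1) = h (cx 0, cy 0).

Definition nc_lengths (beta : R) (phi : R -> R) : R -> Prop :=
  fun L => exists cx cy, noncontractible_lift beta cx cy /\ L = conf_length phi cx cy.

Definition systole_is (beta : R) (phi : R -> R) (s : Rbar) : Prop :=
  is_glb_Rbar (nc_lengths beta phi) s.

(* H_beta-invariant conformal factor, viewed as a function of y only:
   smooth, positive, even and 2beta-periodic. *)
Definition H_invariant_factor (beta : R) (phi : R -> R) : Prop :=
  (forall n y, ex_derive_n phi n y) /\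
  (forall y, 0 < phi y) /\
  (forall y, phi y = phi (- y)) /\
  (forall y, phi y = phi (y + 2 * beta)).

Definition phi0 (y : R) : R := 2 * exp y / (1 + exp (2 * y)).
Definition beta0 : R := ln (1 + sqrt 2).
Definition beta1 : R := ln (2 + sqrt 3).

(* s_beta: the unique s in (0,beta) with int_0^s phi0 + (beta-s) phi0(s) = pi/4
   (chosen by Hilbert's epsilon; it is only used for pi/4 < beta < beta0,
   where it exists and is unique). *)
Definition s_beta (beta : R) : R :=
  epsilon (inhabits 0)
    (fun s => 0 < s < beta /\ RInt phi0 0 s + (beta - s) * phi0 s = PI / 4).

Definition phi_beta (beta : R) (y : R) : R :=
  if Rle_dec beta (PI / 4) then PI / (4 * beta)
  else if Rlt_dec beta beta0 then
    (if Rle_dec y (s_beta beta) then phi0 y else phi0 (s_beta beta))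
  else if Rle_dec beta beta1 then phi0 y
  else (if Rle_dec y beta1 then phi0 y else 1 / 2).

(* Main.v *)
Require Import Defs.
From Stdlib Require Import Reals Lra Classical ClassicalEpsilon.
From Coquelicot Require Import Coquelicot.
Open Scope R_scope.

Definition UC (F : R -> R -> R -> R) : Prop :=
  forall x0 y0 eps, 0 < eps -> exists delta, 0 < delta /\
    forall x y t t', Rabs (x - x0) < delta -> Rabs (y - y0) < delta ->
      Rabs (t - t') < delta -> Rabs (F x y t - F x0 y0 t') < eps.

Definition Bnd (F : R -> R -> R -> R) : Prop :=
  exists M, forall x y t, Rabs (F x y t) <= M.

Lemma UC_plus F G : UC F -> UC G -> UC (fun x y t => F x y t + G x y t).
Proof.
  intros HF HG x0 y0 eps He.
  destruct (HF x0 y0 (eps/2)) as [d1 [Hd1 H1]]; [lra|].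
  destruct (HG x0 y0 (eps/2)) as [d2 [Hd2 H2]]; [lra|].
  exists (Rmin d1 d2); split; [apply Rmin_pos; auto|].
  intros x y t t' Hx Hy Ht.
  pose proof (Rmin_l d1 d2); pose proof (Rmin_r d1 d2).
  specialize (H1 x y t t' ltac:(lra) ltac:(lra) ltac:(lra)).
  specialize (H2 x y t t' ltac:(lra) ltac:(lra) ltac:(lra)).
  replace (F x y t + G x y t - (F x0 y0 t' + G x0 y0 t')) with
    ((F x y t - F x0 y0 t') + (G x y t - G x0 y0 t')) by ring.
  eapply Rle_lt_trans; [apply Rabs_triang|lra].
Qed.

Lemma UC_opp F : UC F -> UC (fun x y t => - F x y t).
Proof.
  intros HF x0 y0 eps He.
  destruct (HF x0 y0 eps He) as [d [Hd H]]. exists d; split; auto.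
  intros. replace (- F x y t - - F x0 y0 t') with (- (F x y t - F x0 y0 t')) by ring.
  rewrite Rabs_Ropp; auto.
Qed.

Lemma UC_mult F G : UC F -> UC G -> Bnd F -> Bnd G ->
  UC (fun x y t => F x y t * G x y t).
Proof.
  intros HF HG [MF BF] [MG BG] x0 y0 eps He.
  assert (HMF : 0 <= MF) by (eapply Rle_trans; [apply Rabs_pos| apply (BF 0 0 0)]).
  assert (HMG : 0 <= MG) by (eapply Rle_trans; [apply Rabs_pos| apply (BG 0 0 0)]).
  set (e1 := eps / (MF + MG + 1)).
  assert (He1 : 0 < e1) by (unfold e1; apply Rdiv_lt_0_compat; lra).
  destruct (HF x0 y0 e1 He1) as [d1 [Hd1 H1]].
  destruct (HG x0 y0 e1 He1) as [d2 [Hd2 H2]].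
  exists (Rmin d1 d2); split; [apply Rmin_pos; auto|].
  intros x y t t' Hx Hy Ht.
  pose proof (Rmin_l d1 d2); pose proof (Rmin_r d1 d2).
  specialize (H1 x y t t' ltac:(lra) ltac:(lra) ltac:(lra)).
  specialize (H2 x y t t' ltac:(lra) ltac:(lra) ltac:(lra)).
  replace (F x y t * G x y t - F x0 y0 t' * G x0 y0 t') with
    (F x y t * (G x y t - G x0 y0 t') + G x0 y0 t' * (F x y t - F x0 y0 t')) by ring.
  eapply Rle_lt_trans; [apply Rabs_triang|].
  rewrite !Rabs_mult.
  assert (A1 : Rabs (F x y t) * Rabs (G x y t - G x0 y0 t') <= MF * e1).
  { apply Rmult_le_compat; auto using Rabs_pos; lra. }
  assert (A2 : Rabs (G x0 y0 t') * Rabs (F x y t - F x0 y0 t') <= MG * e1).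
  { apply Rmult_le_compat; auto using Rabs_pos; lra. }
  assert (A3 : MF * e1 + MG * e1 < eps).
  { unfold e1. replace (MF * (eps / (MF + MG + 1)) + MG * (eps / (MF + MG + 1)))
      with (eps * ((MF + MG) / (MF + MG + 1))) by (field; lra).
    rewrite <- (Rmult_1_r eps) at 2. apply Rmult_lt_compat_l; auto.
    apply Rmult_lt_reg_r with (MF + MG + 1); [lra|].
    unfold Rdiv. rewrite Rmult_assoc, Rinv_l; lra. }
  lra.
Qed.

Lemma Bnd_plus F G : Bnd F -> Bnd G -> Bnd (fun x y t => F x y t + G x y t).
Proof.
  intros [M1 H1] [M2 H2]; exists (M1 + M2); intros.
  eapply Rle_trans; [apply Rabs_triang|]. specialize (H1 x y t); specialize (H2 x y t); lra.
Qed.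

Lemma Bnd_opp F : Bnd F -> Bnd (fun x y t => - F x y t).
Proof. intros [M H]; exists M; intros; rewrite Rabs_Ropp; auto. Qed.

Lemma Bnd_mult F G : Bnd F -> Bnd G -> Bnd (fun x y t => F x y t * G x y t).
Proof.
  intros [M1 H1] [M2 H2]; exists (M1 * M2); intros.
  rewrite Rabs_mult. apply Rmult_le_compat; auto using Rabs_pos.
Qed.

Lemma cont_bounded (k : R -> R) (M : R) : (forall x, continuous k x) ->
  exists B, forall x, Rabs x <= M -> Rabs (k x) <= B.
Proof.
  intros Hk.
  destruct (Rle_lt_dec (-M) M) as [HM|HM].
  - assert (Hc : forall c, -M <= c <= M -> continuity_pt k c).
    { intros c _. apply continuity_pt_filterlim. apply Hk. }
    assert (Hc' : forall c, -M <= c <= M -> continuity_pt (fun x => - k x) c).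
    { intros c Hc0. apply continuity_pt_opp. auto. }
    destruct (continuity_ab_maj k (-M) M HM Hc) as [a [Ha _]].
    destruct (continuity_ab_maj (fun x => - k x) (-M) M HM Hc') as [b [Hb _]].
    exists (Rmax (k a) (- k b)). intros x Hx.
    apply Rabs_le_between in Hx. specialize (Ha x Hx). specialize (Hb x Hx).
    apply Rabs_le. split.
    + pose proof (Rmax_r (k a) (- k b)). lra.
    + pose proof (Rmax_l (k a) (- k b)). lra.
  - exists 0. intros x Hx. pose proof (Rabs_pos x). lra.
Qed.

Lemma Bnd_comp (k : R -> R) F : (forall x, continuous k x) -> Bnd F ->
  Bnd (fun x y t => k (F x y t)).
Proof.
  intros Hk [M HM]. destruct (cont_bounded k M Hk) as [B HB].
  exists B. intros; apply HB, HM.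
Qed.

Lemma UC_comp (k : R -> R) F : (forall x, continuous k x) -> UC F -> Bnd F ->
  UC (fun x y t => k (F x y t)).
Proof.
  intros Hk HF [M HM] x0 y0 eps He.
  destruct (unifcont_1d k (-(M+1)) (M+1) (fun x _ => Hk x) (mkposreal eps He)) as [[d Hd] Hu].
  simpl in Hu.
  destruct (HF x0 y0 (Rmin d 1)) as [d1 [Hd1 H1]]; [apply Rmin_pos; lra|].
  exists d1; split; auto. intros x y t t' Hx Hy Ht.
  specialize (H1 x y t t' Hx Hy Ht).
  pose proof (Rmin_l d 1); pose proof (Rmin_r d 1).
  assert (B1 := HM x y t). assert (B2 := HM x0 y0 t').
  apply Rabs_le_between in B1. apply Rabs_le_between in B2.
  specialize (Hu (F x0 y0 t') (F x y t) ltac:(lra) ltac:(lra)).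
  assert (Hb : ball (F x0 y0 t') d (F x y t)).
  { change (Rabs (F x y t - F x0 y0 t') < d). lra. }
  specialize (Hu Hb).
  apply NNPP in Hu. change (Rabs (k (F x y t) - k (F x0 y0 t')) < eps) in Hu. exact Hu.
Qed.

Lemma sin_lip a b : Rabs (sin a - sin b) <= Rabs (a - b).
Proof.
  destruct (MVT_gen sin b a cos) as [c [_ Hc]].
  - intros x _. apply is_derive_sin.
  - intros x _. apply continuity_sin.
  - rewrite Hc, Rabs_mult. rewrite <- (Rmult_1_l (Rabs (a - b))) at 2.
    apply Rmult_le_compat_r; [apply Rabs_pos|]. apply Rabs_le; apply COS_bound.
Qed.

Lemma cos_lip a b : Rabs (cos a - cos b) <= Rabs (a - b).
Proof.
  destruct (MVT_gen cos b a (fun x => - sin x)) as [c [_ Hc]].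
  - intros x _. apply is_derive_cos.
  - intros x _. apply continuity_cos.
  - rewrite Hc, Rabs_mult. rewrite <- (Rmult_1_l (Rabs (a - b))) at 2.
    apply Rmult_le_compat_r; [apply Rabs_pos|]. rewrite Rabs_Ropp. apply Rabs_le; apply SIN_bound.
Qed.

Lemma UC_lip1 (k : R -> R) : (forall a b, Rabs (k a - k b) <= Rabs (a - b)) ->
  UC (fun x y t => k x) /\ UC (fun x y t => k y) /\ UC (fun x y t => k t).
Proof.
  intros Hk; repeat split; intros x0 y0 eps He; exists eps; split; auto;
  intros x y t t' Hx Hy Ht; eapply Rle_lt_trans; try apply Hk; auto.
Qed.

Lemma UC_const c : UC (fun _ _ _ => c).
Proof.
  intros x0 y0 eps He; exists 1; split; [lra|]; intros.
  replace (c - c) with 0 by ring; rewrite Rabs_R0; auto.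
Qed.

Lemma Bnd_const c : Bnd (fun _ _ _ => c).
Proof. exists (Rabs c); intros; lra. Qed.

Lemma UC_sinx : UC (fun x y t => sin x). Proof. apply (UC_lip1 sin sin_lip). Qed.
Lemma UC_siny : UC (fun x y t => sin y). Proof. apply (UC_lip1 sin sin_lip). Qed.
Lemma UC_sint : UC (fun x y t => sin t). Proof. apply (UC_lip1 sin sin_lip). Qed.
Lemma UC_cosx : UC (fun x y t => cos x). Proof. apply (UC_lip1 cos cos_lip). Qed.
Lemma UC_cosy : UC (fun x y t => cos y). Proof. apply (UC_lip1 cos cos_lip). Qed.
Lemma UC_cost : UC (fun x y t => cos t). Proof. apply (UC_lip1 cos cos_lip). Qed.
Lemma Bnd_sinx : Bnd (fun x y t => sin x). Proof. exists 1; intros; apply Rabs_le, SIN_bound. Qed.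
Lemma Bnd_siny : Bnd (fun x y t => sin y). Proof. exists 1; intros; apply Rabs_le, SIN_bound. Qed.
Lemma Bnd_sint : Bnd (fun x y t => sin t). Proof. exists 1; intros; apply Rabs_le, SIN_bound. Qed.
Lemma Bnd_cosx : Bnd (fun x y t => cos x). Proof. exists 1; intros; apply Rabs_le, COS_bound. Qed.
Lemma Bnd_cosy : Bnd (fun x y t => cos y). Proof. exists 1; intros; apply Rabs_le, COS_bound. Qed.
Lemma Bnd_cost : Bnd (fun x y t => cos t). Proof. exists 1; intros; apply Rabs_le, COS_bound. Qed.

Lemma cont_eps (f : R -> R) x0 :
  (forall eps, 0 < eps -> exists d, 0 < d /\ forall x, Rabs (x - x0) < d -> Rabs (f x - f x0) < eps) ->
  continuous f x0.
Proof.
  intros H. apply continuity_pt_filterlim.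
  intros eps He. destruct (H eps He) as [d [Hd Hx]].
  exists d; split; auto. intros x [_ Hx']. apply Hx. exact Hx'.
Qed.

Lemma cont_2d_eps (f : R -> R -> R) x0 y0 :
  (forall eps, 0 < eps -> exists d, 0 < d /\ forall x y, Rabs (x - x0) < d -> Rabs (y - y0) < d ->
     Rabs (f x y - f x0 y0) < eps) ->
  continuity_2d_pt f x0 y0.
Proof.
  intros H eps. destruct (H eps (cond_pos eps)) as [d [Hd Hx]].
  exists (mkposreal d Hd). simpl. intros. apply Hx; auto.
Qed.

Lemma UC_cont_xt F y0 x0 t0 : UC F -> continuity_2d_pt (fun x t => F x y0 t) x0 t0.
Proof.
  intros HF. apply cont_2d_eps. intros eps He.
  destruct (HF x0 y0 eps He) as [d [Hd H]]. exists d; split; auto.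
  intros x t Hx Ht. apply H; auto. rewrite Rminus_diag, Rabs_R0; auto.
Qed.

Lemma UC_cont_yt F x0 y0 t0 : UC F -> continuity_2d_pt (fun y t => F x0 y t) y0 t0.
Proof.
  intros HF. apply cont_2d_eps. intros eps He.
  destruct (HF x0 y0 eps He) as [d [Hd H]]. exists d; split; auto.
  intros y t Hy Ht. apply H; auto. rewrite Rminus_diag, Rabs_R0; auto.
Qed.

Lemma UC_cont_t F x0 y0 t0 : UC F -> continuous (fun t => F x0 y0 t) t0.
Proof.
  intros HF. apply cont_eps. intros eps He.
  destruct (HF x0 y0 eps He) as [d [Hd H]]. exists d; split; auto.
  intros t Ht. apply H; auto; rewrite Rminus_diag, Rabs_R0; auto.
Qed.

Lemma UC_exRInt F x y a b : UC F -> ex_RInt (F x y) a b.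
Proof. intros HF. apply (ex_RInt_continuous (V:=R_CompleteNormedModule)). intros z _. apply UC_cont_t; auto. Qed.

Lemma UC_RInt_diff F a b x y x0 y0 eps : UC F -> a <= b ->
  (forall t, Rabs (F x y t - F x0 y0 t) <= eps) ->
  Rabs (RInt (F x y) a b - RInt (F x0 y0) a b) <= (b - a) * eps.
Proof.
  intros HF Hab Ht.
  assert (E : RInt (F x y) a b - RInt (F x0 y0) a b = RInt (fun t => F x y t - F x0 y0 t) a b).
  { symmetry. apply (RInt_minus (V:=R_CompleteNormedModule)); apply UC_exRInt; auto. }
  rewrite E. apply abs_RInt_le_const; auto.
  apply (ex_RInt_minus (V:=R_NormedModule)); apply UC_exRInt; auto.
Qed.

Lemma UC_RInt_cont2 F a b x0 y0 : UC F -> a <= b ->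
  continuity_2d_pt (fun x y => RInt (F x y) a b) x0 y0.
Proof.
  intros HF Hab. apply cont_2d_eps. intros eps He.
  set (e1 := eps / (b - a + 1)).
  assert (He1 : 0 < e1) by (unfold e1; apply Rdiv_lt_0_compat; lra).
  destruct (HF x0 y0 e1 He1) as [d [Hd H]]. exists d; split; auto.
  intros x y Hx Hy. eapply Rle_lt_trans.
  - apply (UC_RInt_diff F a b x y x0 y0 e1); auto. intros t; left; apply H; auto.
    rewrite Rminus_diag, Rabs_R0; auto.
  - unfold e1. apply Rmult_lt_reg_r with (b - a + 1); [lra|].
    replace ((b - a) * (eps / (b - a + 1)) * (b - a + 1)) with ((b - a) * eps) by (field; lra).
    nra.
Qed.

Lemma UC_RInt_cont_x F a b x0 y0 : UC F -> a <= b ->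
  continuous (fun x => RInt (F x y0) a b) x0.
Proof.
  intros HF Hab. apply cont_eps. intros eps He.
  destruct (UC_RInt_cont2 F a b x0 y0 HF Hab (mkposreal eps He)) as [d Hd].
  exists d; split; [apply cond_pos|]. intros x Hx. apply (Hd x y0); auto.
  rewrite Rminus_diag, Rabs_R0; apply cond_pos.
Qed.

Lemma UC_RInt_cont_y F a b x0 y0 : UC F -> a <= b ->
  continuous (fun y => RInt (F x0 y) a b) y0.
Proof.
  intros HF Hab. apply cont_eps. intros eps He.
  destruct (UC_RInt_cont2 F a b x0 y0 HF Hab (mkposreal eps He)) as [d Hd].
  exists d; split; [apply cond_pos|]. intros y Hy. apply (Hd x0 y); auto.
  rewrite Rminus_diag, Rabs_R0; apply cond_pos.
Qed.

Ltac uc_base := first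
  [ apply UC_const | apply UC_sinx | apply UC_siny | apply UC_sint
  | apply UC_cosx | apply UC_cosy | apply UC_cost ].
Ltac bnd_base := first
  [ apply Bnd_const | apply Bnd_sinx | apply Bnd_siny | apply Bnd_sint
  | apply Bnd_cosx | apply Bnd_cosy | apply Bnd_cost ].
Ltac solve_bnd := first
  [ bnd_base
  | apply Bnd_plus; solve_bnd
  | apply Bnd_opp; solve_bnd
  | apply Bnd_mult; solve_bnd
  | apply Bnd_comp; [assumption| solve_bnd] ].
Ltac solve_uc := first
  [ uc_base
  | apply UC_plus; solve_uc
  | apply UC_opp; solve_uc
  | apply UC_mult; [solve_uc|solve_uc|solve_bnd|solve_bnd]
  | apply UC_comp; [assumption|solve_uc|solve_bnd] ].

Section Sphere.
Variable h : R -> R.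
Hypothesis Hd : forall x, ex_derive h x.
Hypothesis Hc : forall x, continuous (Derive h) x.

Lemma Hc0 : forall x, continuous h x.
Proof. intros; apply (ex_derive_continuous (K:=R_AbsRing) (V:=R_NormedModule)), Hd. Qed.

Let dh := Derive h.
Let u a th t := sin th * sin t * cos a - cos th * sin a.
Let G a th t := sin th * h (u a th t).
Let E a th t := sin th * dh (u a th t) * (- sin th * sin t * sin a - cos th * cos a).
Let P a th t := - sin th * sin t * h (u a th t).
Let dP a th t := - cos th * sin t * h (u a th t)
   - sin th * sin t * dh (u a th t) * (cos th * sin t * cos a + sin th * sin a).
Let Q a th t := - cos th * cos t * h (u a th t).
Let dQ a th t := cos th * sin t * h (u a th t)
   - cos th * cos t * dh (u a th t) * (sin th * cos t * cos a).

Lemma UC_G : UC G.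
Proof. pose proof Hc0. unfold G, u. solve_uc. Qed.
Lemma UC_E : UC E.
Proof. pose proof Hc. unfold E, u, dh. solve_uc. Qed.
Lemma UC_dP : UC dP.
Proof. pose proof Hc0. pose proof Hc. unfold dP, u, dh. solve_uc. Qed.
Lemma UC_dQ : UC dQ.
Proof. pose proof Hc0. pose proof Hc. unfold dQ, u, dh. solve_uc. Qed.

Lemma der_G a th t : is_derive (fun z => G z th t) a (E a th t).
Proof.
  unfold G, E, u, dh. auto_derive; [apply Hd|]. change (Derive (fun x => h x)) with (Derive h). unfold Rminus; ring.
Qed.
Lemma der_P a th t : is_derive (fun z => P a z t) th (dP a th t).
Proof.
  unfold P, dP, u, dh. auto_derive; [apply Hd|]. change (Derive (fun x => h x)) with (Derive h). unfold Rminus; ring.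
Qed.
Lemma der_Q a th t : is_derive (fun z => Q a th z) t (dQ a th t).
Proof.
  unfold Q, dQ, u, dh. auto_derive; [apply Hd|]. change (Derive (fun x => h x)) with (Derive h). unfold Rminus; ring.
Qed.


Let J a th := RInt (fun t => G a th t) 0 (2 * PI).
Let I a := RInt (fun th => J a th) 0 PI.

Lemma twoPI_pos : 0 <= 2 * PI.
Proof. pose proof PI_RGT_0; lra. Qed.

Lemma der_J a th : is_derive (fun z => J z th) a (RInt (fun t => E a th t) 0 (2 * PI)).
Proof.
  assert (HD : forall a t, Derive (fun z => G z th t) a = E a th t)
    by (intros; apply is_derive_unique, der_G).
  unfold J.
  rewrite <- (RInt_ext (fun t => Derive (fun z => G z th t) a)).
  2:{ intros; apply HD. }
  apply (is_derive_RInt_param (fun z t => G z th t)).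
  - apply filter_forall. intros x t _. eexists; apply der_G.
  - intros t _. apply (continuity_2d_pt_ext (fun u v => E u th v)).
    + intros; symmetry; apply HD.
    + apply UC_cont_xt, UC_E.
  - apply filter_forall. intros y. apply UC_exRInt, UC_G.
Qed.

Lemma der_I a : is_derive I a (RInt (fun th => RInt (fun t => E a th t) 0 (2 * PI)) 0 PI).
Proof.
  assert (HD : forall a th, Derive (fun z => J z th) a = RInt (fun t => E a th t) 0 (2 * PI))
    by (intros; apply is_derive_unique, der_J).
  unfold I.
  rewrite <- (RInt_ext (fun th => Derive (fun z => J z th) a)).
  2:{ intros; apply HD. }
  apply (is_derive_RInt_param (fun z th => J z th)).
  - apply filter_forall. intros x th _. eexists; apply der_J.
  - intros th _. apply (continuity_2d_pt_ext (fun u v => RInt (fun t => E u v t) 0 (2 * PI))).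
    + intros; symmetry; apply HD.
    + apply UC_RInt_cont2; [apply UC_E| apply twoPI_pos].
  - apply filter_forall. intros y.
    apply (ex_RInt_continuous (V:=R_CompleteNormedModule)). intros z _.
    apply (UC_RInt_cont_y G 0 (2 * PI) y z UC_G twoPI_pos).
Qed.

Lemma E_split a th t : E a th t = dP a th t + dQ a th t.
Proof.
  unfold E, dP, dQ. pose proof (sin2_cos2 t). unfold Rsqr in H.
  set (A := dh (u a th t)). set (B := h (u a th t)).
  replace (- sin th * sin t * sin a - cos th * cos a) with
    (- sin th * sin t * sin a - cos th * cos a * (sin t * sin t + cos t * cos t)) by (rewrite H; ring).
  ring.
Qed.

Lemma int_dQ a th : RInt (fun t => dQ a th t) 0 (2 * PI) = 0.
Proof.
  assert (H : is_RInt (fun t => dQ a th t) 0 (2 * PI) (minus (Q a th (2 * PI)) (Q a th 0))).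
  { apply (is_RInt_derive (V:=R_CompleteNormedModule) (fun t => Q a th t)).
    - intros; apply der_Q.
    - intros; apply UC_cont_t, UC_dQ. }
  apply (is_RInt_unique (V:=R_CompleteNormedModule)) in H. rewrite H.
  unfold Q, u. rewrite sin_2PI, cos_2PI, sin_0, cos_0.
  unfold minus, plus, opp; simpl. ring.
Qed.

Lemma int_E a : RInt (fun th => RInt (fun t => E a th t) 0 (2 * PI)) 0 PI = 0.
Proof.
  set (Phi th := RInt (fun t => P a th t) 0 (2 * PI)).
  assert (HD : forall th, is_derive Phi th (RInt (fun t => dP a th t) 0 (2 * PI))).
  { intros th.
    assert (HD : forall th t, Derive (fun z => P a z t) th = dP a th t)
      by (intros; apply is_derive_unique, der_P).
    unfold Phi.
    rewrite <- (RInt_ext (fun t => Derive (fun z => P a z t) th)).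
    2:{ intros; apply HD. }
    apply (is_derive_RInt_param (fun z t => P a z t)).
    - apply filter_forall. intros x t _. eexists; apply der_P.
    - intros t _. apply (continuity_2d_pt_ext (fun u v => dP a u v)).
      + intros; symmetry; apply HD.
      + apply UC_cont_yt, UC_dP.
    - apply filter_forall. intros y.
      apply (ex_RInt_continuous (V:=R_CompleteNormedModule)). intros z _.
      apply (UC_cont_t (fun a th t => P a th t)). unfold P, u. pose proof Hc0. solve_uc. }
  assert (EQ : forall th, RInt (fun t => E a th t) 0 (2 * PI) = RInt (fun t => dP a th t) 0 (2 * PI)).
  { intros th. rewrite (RInt_ext (V:=R_CompleteNormedModule) _ (fun t => plus (dP a th t) (dQ a th t))).
    2:{ intros; apply E_split. }
    rewrite (RInt_plus (V:=R_CompleteNormedModule)); try (apply UC_exRInt; first [apply UC_dP | apply UC_dQ]).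
    rewrite int_dQ. unfold plus; simpl. rewrite Rplus_0_r; reflexivity. }
  rewrite (RInt_ext _ (fun th => RInt (fun t => dP a th t) 0 (2 * PI))).
  2:{ intros; apply EQ. }
  assert (H : is_RInt (fun th => RInt (fun t => dP a th t) 0 (2 * PI)) 0 PI (minus (Phi PI) (Phi 0))).
  { apply (is_RInt_derive (V:=R_CompleteNormedModule) Phi).
    - intros; apply HD.
    - intros; apply (UC_RInt_cont_y dP 0 (2 * PI) a x UC_dP twoPI_pos). }
  apply (is_RInt_unique (V:=R_CompleteNormedModule)) in H. rewrite H.
  assert (Z : forall th, sin th = 0 -> Phi th = 0).
  { intros th Hs. unfold Phi. rewrite (RInt_ext _ (fun _ => 0)).
    - rewrite RInt_const. change (Rmult (2 * PI - 0) 0 = 0). ring.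
    - intros; unfold P; rewrite Hs; rewrite Ropp_0, !Rmult_0_l; reflexivity. }
  rewrite (Z PI sin_PI), (Z 0 sin_0). unfold minus, plus, opp; simpl. ring.
Qed.

Lemma I_const : I (PI / 2) = I 0.
Proof.
  assert (H : is_RInt (fun _ => 0) 0 (PI / 2) (minus (I (PI/2)) (I 0))).
  { apply (is_RInt_derive (V:=R_CompleteNormedModule) I).
    - intros x _. rewrite <- (int_E x). apply der_I.
    - intros; apply continuous_const. }
  apply (is_RInt_unique (V:=R_CompleteNormedModule)) in H. rewrite RInt_const in H.
  unfold scal, minus, plus, opp in H; simpl in H. unfold mult in H; simpl in H.
  lra.
Qed.

Lemma sphere_identity :
  RInt (fun th => RInt (fun t => sin th * h (sin th * sin t)) 0 (2 * PI)) 0 PI =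
  RInt (fun th => RInt (fun t => sin th * h (- cos th)) 0 (2 * PI)) 0 PI.
Proof.
  pose proof I_const as H. unfold I, J, G, u in H.
  rewrite sin_PI2, cos_PI2, sin_0, cos_0 in H.
  transitivity (RInt (fun th => RInt (fun t => sin th * h (sin th * sin t * 1 - cos th * 0)) 0 (2 * PI)) 0 PI).
  { apply RInt_ext; intros; apply RInt_ext; intros. f_equal. f_equal. ring. }
  rewrite <- H.
  apply RInt_ext; intros; apply RInt_ext; intros. f_equal. f_equal. ring.
Qed.

End Sphere.

Definition C1 (g : R -> R) := (forall x, ex_derive g x) /\ (forall x, continuous (Derive g) x).

Lemma C1_cont g : C1 g -> forall x, continuous g x.
Proof. intros [H _] x. apply (ex_derive_continuous (K:=R_AbsRing) (V:=R_NormedModule)), H. Qed.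

Lemma C1_comp g k : C1 g -> C1 k -> C1 (fun x => g (k x)).
Proof.
  intros Hg Hk. pose proof (C1_cont k Hk) as Ck. destruct Hg as [Dg Cg]; destruct Hk as [Dk Ck'].
  split.
  - intros x. apply ex_derive_comp; auto.
  - intros x. apply (continuous_ext (fun y => Derive k y * Derive g (k y))).
    + intros y. symmetry; apply Derive_comp; auto.
    + apply (continuous_mult (K:=R_AbsRing)); auto.
      apply (continuous_comp k (Derive g)); auto.
Qed.

Lemma C1_mult g k : C1 g -> C1 k -> C1 (fun x => g x * k x).
Proof.
  intros Hg Hk. pose proof (C1_cont k Hk) as Ck. pose proof (C1_cont g Hg) as Cg0.
  destruct Hg as [Dg Cg]; destruct Hk as [Dk Ck'].
  split.
  - intros x. apply ex_derive_mult; auto.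
  - intros x. apply (continuous_ext (fun y => Derive g y * k y + g y * Derive k y)).
    + intros y. symmetry; apply Derive_mult; auto.
    + apply (continuous_plus (V:=R_NormedModule));
      apply (continuous_mult (K:=R_AbsRing)); auto.
Qed.

Lemma C1_lin a b : C1 (fun x => a * x + b).
Proof.
  split.
  - intros x. auto_derive. auto.
  - intros x. apply (continuous_ext (fun _ => a)).
    + intros y. symmetry. apply is_derive_unique. auto_derive; auto; ring.
    + apply continuous_const.
Qed.

Definition rr (z : R) := / sqrt (z ^ 2 + 1).

Lemma sq1_pos z : 0 < z ^ 2 + 1.
Proof. pose proof (pow2_ge_0 z). lra. Qed.

Lemma rr_der z : is_derive rr z (- z * / sqrt (z ^ 2 + 1) / (z ^ 2 + 1)).
Proof.
  unfold rr. pose proof (sq1_pos z). auto_derive.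
  - repeat split; auto. simpl in H. apply Rgt_not_eq, sqrt_lt_R0; auto.
  - replace (z * (z * 1)) with (z ^ 2) by ring.
    pose proof (sqrt_lt_R0 _ H). pose proof (sqrt_sqrt (z ^ 2 + 1) (Rlt_le _ _ H)).
    rewrite H1. field. lra.
Qed.

Lemma C1_rr : C1 rr.
Proof.
  split.
  - intros x; eexists; apply rr_der.
  - intros x. apply (continuous_ext (fun z => - z * / sqrt (z ^ 2 + 1) / (z ^ 2 + 1))).
    + intros; symmetry; apply is_derive_unique, rr_der.
    + apply (ex_derive_continuous (K:=R_AbsRing) (V:=R_NormedModule)).
      pose proof (sq1_pos x). simpl in H. auto_derive. repeat split; try lra.
      apply Rgt_not_eq, sqrt_lt_R0; auto.
Qed.

Lemma arcsinh_der z : is_derive arcsinh z (rr z).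
Proof. apply is_derive_Reals, derivable_pt_lim_arcsinh. Qed.

Lemma C1_arcsinh : C1 arcsinh.
Proof.
  split.
  - intros x; eexists; apply arcsinh_der.
  - intros x. apply (continuous_ext rr).
    + intros; symmetry; apply is_derive_unique, arcsinh_der.
    + apply C1_cont, C1_rr.
Qed.

Lemma arcsinh_odd z : arcsinh (- z) = - arcsinh z.
Proof.
  rewrite <- (sinh_arcsinh z) at 1.
  replace (- sinh (arcsinh z)) with (sinh (- arcsinh z)).
  - apply arcsinh_sinh.
  - unfold sinh. rewrite Ropp_involutive. field.
Qed.

Lemma cosh_pos y : 0 < cosh y.
Proof. unfold cosh. pose proof (exp_pos y); pose proof (exp_pos (- y)). lra. Qed.

Lemma cosh_sinh y : cosh y * cosh y - sinh y * sinh y = 1.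
Proof.
  unfold cosh, sinh. replace ((exp y + exp (- y)) / 2 * ((exp y + exp (- y)) / 2) -
   (exp y - exp (- y)) / 2 * ((exp y - exp (- y)) / 2)) with (exp y * exp (- y)) by field.
  rewrite <- exp_plus. replace (y + - y) with 0 by ring. apply exp_0.
Qed.

Lemma sqrt_sinh y : sqrt (sinh y ^ 2 + 1) = cosh y.
Proof.
  apply sqrt_lem_1.
  - pose proof (pow2_ge_0 (sinh y)); lra.
  - left; apply cosh_pos.
  - pose proof (cosh_sinh y). simpl. lra.
Qed.

Lemma sinh_der y : is_derive sinh y (cosh y).
Proof. unfold sinh, cosh. auto_derive; auto. field. Qed.

Lemma cosh_der y : is_derive cosh y (sinh y).
Proof. unfold sinh, cosh. auto_derive; auto. field. Qed.

Lemma atan_der x : is_derive atan x (/ (1 + x ^ 2)).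
Proof. apply is_derive_Reals, derivable_pt_lim_atan. Qed.

Lemma mul_m1_div X K : K <> 0 -> X * (-1 / K) = - X / K.
Proof. intros; field; auto. Qed.

Lemma int_sin_sqrt K : 0 < K ->
  RInt (fun th => sin th / sqrt (1 + (K * sin th) ^ 2)) 0 PI = 2 * atan K / K.
Proof.
  intros HK.
  set (w th := K * cos th / sqrt (1 + (K * sin th) ^ 2)).
  set (A th := - atan (w th) / K).
  assert (HS : forall th, 0 < 1 + (K * sin th) ^ 2) by (intros; pose proof (pow2_ge_0 (K * sin th)); lra).
  assert (Hw : forall th, is_derive w th (- K * sin th * (1 + K ^ 2) / ((1 + (K * sin th) ^ 2) * sqrt (1 + (K * sin th) ^ 2)))).
  { intros th. unfold w. pose proof (HS th).
    pose proof (sqrt_lt_R0 _ H). pose proof (sqrt_sqrt _ (Rlt_le _ _ H)).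
    auto_derive.
    - replace (1 + K * sin th * (K * sin th * 1)) with (1 + (K * sin th) ^ 2) by ring.
      repeat split; lra.
    - replace (1 + K * sin th * (K * sin th * 1)) with (1 + (K * sin th) ^ 2) by ring.
      set (S := sqrt (1 + (K * sin th) ^ 2)) in *. pose proof (sin2_cos2 th). unfold Rsqr in H2.
      rewrite H1. field_simplify_eq; [|lra].
      replace (cos th ^ 2) with (1 - sin th ^ 2) by (simpl; lra). ring. }
  assert (HA : forall th, is_derive A th (sin th / sqrt (1 + (K * sin th) ^ 2))).
  { intros th. unfold A.
    evar (d : R).
    assert (H1 : is_derive (fun t => atan (w t)) th d).
    { apply (is_derive_comp atan w). apply atan_der. apply Hw. }
    subst d.
    replace (sin th / sqrt (1 + (K * sin th) ^ 2)) with
      (- (- K * sin th * (1 + K ^ 2) / ((1 + (K * sin th) ^ 2) * sqrt (1 + (K * sin th) ^ 2)) *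
          / (1 + w th ^ 2)) / K).
    - apply (is_derive_scal_l (fun t => atan (w t))) with (k := -1/K) in H1.
      match type of H1 with is_derive _ _ ?D => replace (- _ / K) with D end.
      + eapply is_derive_ext; [|exact H1]. intros t; simpl. unfold scal; simpl; unfold mult; simpl. field. lra.
      + unfold scal; simpl; unfold mult; simpl. match goal with |- ?X * (-1 / K) = - ?Y / K => replace Y with X by reflexivity; apply mul_m1_div; lra end.
    - unfold w. pose proof (HS th) as Q0.
      pose proof (sqrt_lt_R0 _ Q0) as Q1. pose proof (sqrt_sqrt _ (Rlt_le _ _ Q0)) as Q2.
      set (S := sqrt (1 + (K * sin th) ^ 2)) in *.
      pose proof (sin2_cos2 th) as Q3. unfold Rsqr in Q3.
      assert (E1 : 1 + (K * cos th / S) ^ 2 = (1 + K ^ 2) / (S * S)).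
      { rewrite Q2. field_simplify_eq; [|lra]. replace (S ^ 2) with (1 + (K * sin th) ^ 2) by (simpl; lra). replace (cos th ^ 2) with (1 - sin th ^ 2) by (simpl; lra). ring. }
      rewrite E1. rewrite Q2. field. repeat split; try lra. pose proof (pow2_ge_0 K). lra. }
  assert (HI : is_RInt (fun th => sin th / sqrt (1 + (K * sin th) ^ 2)) 0 PI (minus (A PI) (A 0))).
  { apply (is_RInt_derive (V:=R_CompleteNormedModule) A).
    - intros; apply HA.
    - intros x _. apply (ex_derive_continuous (K:=R_AbsRing) (V:=R_NormedModule)).
      pose proof (HS x). auto_derive. replace (1 + K * sin x * (K * sin x * 1)) with (1 + (K * sin x) ^ 2) by ring.
      repeat split; try lra. apply Rgt_not_eq, sqrt_lt_R0; auto. }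
  apply (is_RInt_unique (V:=R_CompleteNormedModule)) in HI. rewrite HI.
  unfold A, w. rewrite sin_PI, cos_PI, sin_0, cos_0.
  replace (1 + (K * 0) ^ 2) with 1 by ring. rewrite sqrt_1.
  replace (K * -1 / 1) with (- K) by field. replace (K * 1 / 1) with K by field.
  rewrite atan_opp. unfold minus, plus, opp; simpl. field. lra.
Qed.

Section LemF.
Variable phi : R -> R.
Hypothesis Hphi : C1 phi.
Hypothesis Heven : forall y, phi y = phi (- y).
Hypothesis HA : forall k, PI <= conf_length phi (fun t => PI * t) (fun t => arcsinh (k * sin (PI * t))).

Definition ff z := phi (arcsinh z) * rr z.

Lemma C1_ff : C1 ff.
Proof. apply C1_mult; [apply (C1_comp phi arcsinh Hphi C1_arcsinh)| apply C1_rr]. Qed.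

Lemma ff_cont : forall x, continuous ff x.
Proof. apply C1_cont, C1_ff. Qed.

Lemma rr_pos z : 0 < rr z.
Proof. unfold rr. apply Rinv_0_lt_compat, sqrt_lt_R0, sq1_pos. Qed.

Lemma rr_sq z : rr z * rr z = / (z ^ 2 + 1).
Proof.
  unfold rr. pose proof (sq1_pos z). pose proof (sqrt_lt_R0 _ H).
  rewrite <- Rinv_mult. rewrite sqrt_sqrt; lra.
Qed.

Lemma exRInt_ffk k : ex_RInt (fun t => ff (k * sin (PI * t))) 0 1.
Proof.
  apply (ex_RInt_continuous (V:=R_CompleteNormedModule)). intros z _.
  apply (continuous_comp (fun t => k * sin (PI * t)) ff); [|apply ff_cont].
  apply (ex_derive_continuous (K:=R_AbsRing) (V:=R_NormedModule)). auto_derive; auto.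
Qed.

Lemma lenA k : conf_length phi (fun t => PI * t) (fun t => arcsinh (k * sin (PI * t))) =
  PI * sqrt (1 + k ^ 2) * RInt (fun t => ff (k * sin (PI * t))) 0 1.
Proof.
  unfold conf_length.
  assert (Dx : forall t, Derive (fun t => PI * t) t = PI).
  { intros; apply is_derive_unique. auto_derive; auto; ring. }
  assert (Dy : forall t, Derive (fun t => arcsinh (k * sin (PI * t))) t =
                     rr (k * sin (PI * t)) * (k * (PI * cos (PI * t)))).
  { intros t. apply is_derive_unique.
    assert (H : is_derive (fun t => k * sin (PI * t)) t (k * (PI * cos (PI * t)))) by (auto_derive; auto; ring).
    pose proof (is_derive_comp arcsinh _ t _ _ (arcsinh_der _) H) as H2.
    unfold scal in H2; simpl in H2; unfold mult in H2; simpl in H2.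
    rewrite Rmult_comm. exact H2. }
  rewrite <- (RInt_scal (V:=R_CompleteNormedModule)); [|apply exRInt_ffk].
  apply RInt_ext. intros t _. rewrite Dx, Dy.
  set (s := k * sin (PI * t)).
  change (scal (PI * sqrt (1 + k ^ 2)) (ff s)) with (PI * sqrt (1 + k ^ 2) * ff s). unfold ff.
  assert (Hsq : sqrt (PI ^ 2 + (rr s * (k * (PI * cos (PI * t)))) ^ 2) = PI * sqrt (1 + k ^ 2) * rr s).
  { apply sqrt_lem_1.
    - pose proof (pow2_ge_0 PI); pose proof (pow2_ge_0 (rr s * (k * (PI * cos (PI * t))))); lra.
    - pose proof PI_RGT_0. pose proof (sqrt_pos (1 + k ^ 2)). pose proof (rr_pos s).
      apply Rmult_le_pos; [apply Rmult_le_pos|]; lra.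
    - pose proof (pow2_ge_0 k).
      replace (PI * sqrt (1 + k ^ 2) * rr s * (PI * sqrt (1 + k ^ 2) * rr s)) with
        (PI * PI * (sqrt (1 + k ^ 2) * sqrt (1 + k ^ 2)) * (rr s * rr s)) by ring.
      rewrite sqrt_sqrt by lra.
      replace ((rr s * (k * (PI * cos (PI * t)))) ^ 2) with (k ^ 2 * PI ^ 2 * cos (PI * t) ^ 2 * (rr s * rr s)) by ring.
      rewrite rr_sq. pose proof (sq1_pos s). unfold s.
      pose proof (sin2_cos2 (PI * t)). unfold Rsqr in H1.
      field_simplify_eq; [|unfold s in H0; lra].
      replace (cos (PI * t) ^ 2) with (1 - sin (PI * t) ^ 2) by (simpl; lra). ring. }
  rewrite Hsq. change (phi (arcsinh s) * (PI * sqrt (1 + k ^ 2) * rr s) = PI * sqrt (1 + k ^ 2) * (phi (arcsinh s) * rr s)). ring.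
Qed.


Lemma bound_k k : 1 <= sqrt (1 + k ^ 2) * RInt (fun t => ff (k * sin (PI * t))) 0 1.
Proof.
  pose proof (HA k) as H. rewrite lenA in H. pose proof PI_RGT_0.
  apply Rmult_le_reg_l with PI; auto. rewrite Rmult_1_r. rewrite <- Rmult_assoc. exact H.
Qed.

Lemma exRInt_ffs k a b : ex_RInt (fun t => ff (k * sin t)) a b.
Proof.
  apply (ex_RInt_continuous (V:=R_CompleteNormedModule)). intros z _.
  apply (continuous_comp (fun t => k * sin t) ff); [|apply ff_cont].
  apply (ex_derive_continuous (K:=R_AbsRing) (V:=R_NormedModule)). auto_derive; auto.
Qed.

Lemma inner2pi k : RInt (fun t => ff (k * sin t)) 0 (2 * PI) =
  PI * RInt (fun t => ff (k * sin (PI * t))) 0 1 + PI * RInt (fun t => ff ((- k) * sin (PI * t))) 0 1.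
Proof.
  rewrite <- (RInt_Chasles (V:=R_CompleteNormedModule) _ 0 PI (2 * PI)); try apply exRInt_ffs.
  unfold plus; simpl. f_equal.
  - rewrite <- (RInt_scal (V:=R_CompleteNormedModule)); [|apply exRInt_ffk].
    replace 0 with (PI * 0 + 0) at 1 by ring. replace PI with (PI * 1 + 0) at 2 by ring.
    rewrite <- (RInt_comp_lin (V:=R_CompleteNormedModule)); [|apply exRInt_ffs].
    apply RInt_ext; intros. replace (PI * x + 0) with (PI * x) by ring. reflexivity.
  - rewrite <- (RInt_scal (V:=R_CompleteNormedModule)); [|apply exRInt_ffk].
    replace PI with (PI * 0 + PI) at 1 by ring. replace (2 * PI) with (PI * 1 + PI) by ring.
    rewrite <- (RInt_comp_lin (V:=R_CompleteNormedModule)); [|apply exRInt_ffs].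
    apply RInt_ext; intros. rewrite neg_sin.
    replace (k * - sin (PI * x)) with (- k * sin (PI * x)) by ring. reflexivity.
Qed.

Lemma inner_ge k : 2 * PI / sqrt (1 + k ^ 2) <= RInt (fun t => ff (k * sin t)) 0 (2 * PI).
Proof.
  rewrite inner2pi. pose proof (bound_k k). pose proof (bound_k (- k)).
  replace ((- k) ^ 2) with (k ^ 2) in H0 by ring.
  pose proof (pow2_ge_0 k). pose proof (sqrt_lt_R0 (1 + k ^ 2) ltac:(lra)). pose proof PI_RGT_0.
  apply Rmult_le_reg_l with (sqrt (1 + k ^ 2)); auto.
  replace (sqrt (1 + k ^ 2) * (2 * PI / sqrt (1 + k ^ 2))) with (2 * PI) by (field; lra).
  nra.
Qed.


Lemma sinh_pos Y : 0 < Y -> 0 < sinh Y.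
Proof. intros. unfold sinh. pose proof (exp_increasing (- Y) Y ltac:(lra)). lra. Qed.

Lemma sinh_opp Y : sinh (- Y) = - sinh Y.
Proof. unfold sinh. rewrite Ropp_involutive. field. Qed.

Lemma phi_cont : forall x, continuous phi x.
Proof. apply C1_cont, Hphi. Qed.

Lemma exRInt_phi a b : ex_RInt phi a b.
Proof. apply (ex_RInt_continuous (V:=R_CompleteNormedModule)). intros; apply phi_cont. Qed.

Lemma int_sym Y : RInt phi (- Y) Y = 2 * RInt phi 0 Y.
Proof.
  rewrite <- (RInt_Chasles (V:=R_CompleteNormedModule) _ (- Y) 0 Y); try apply exRInt_phi.
  unfold plus; simpl.
  assert (RInt phi (- Y) 0 = RInt phi 0 Y).
  { rewrite <- (opp_RInt_swap (V:=R_CompleteNormedModule)); [|apply exRInt_phi].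
    replace 0 with (-1 * 0 + 0) at 1 by ring. replace (- Y) with (-1 * Y + 0) by ring.
    rewrite <- (RInt_comp_lin (V:=R_CompleteNormedModule)); [|apply exRInt_phi].
    rewrite (RInt_scal (V:=R_CompleteNormedModule)).
    - change (- (-1 * RInt (fun y => phi (-1 * y + 0)) 0 Y) = RInt phi 0 Y).
      assert (E : forall x : R, - (-1 * x) = x) by (intros; ring). rewrite E.
      apply RInt_ext; intros. rewrite Heven. f_equal. ring.
    - apply (ex_RInt_continuous (V:=R_CompleteNormedModule)). intros.
      apply (continuous_comp (fun y => -1 * y + 0) phi); [|apply phi_cont].
      apply (ex_derive_continuous (K:=R_AbsRing) (V:=R_NormedModule)). auto_derive; auto. }
  rewrite H. ring.
Qed.

Lemma int_ff_phi Y : RInt ff (- sinh Y) (sinh Y) = RInt phi (- Y) Y.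
Proof.
  rewrite <- sinh_opp.
  rewrite <- (RInt_comp ff sinh cosh).
  - apply RInt_ext. intros x _. change (cosh x * ff (sinh x) = phi x).
    unfold ff, rr. rewrite arcsinh_sinh, sqrt_sinh. pose proof (cosh_pos x). field. lra.
  - intros; apply ff_cont.
  - intros; split; [apply sinh_der|]. apply (ex_derive_continuous (K:=R_AbsRing) (V:=R_NormedModule)).
    eexists; apply cosh_der.
Qed.

Lemma cont_sin_sqrt K z : continuous (fun th => sin th / sqrt (1 + (K * sin th) ^ 2)) z.
Proof.
  apply (ex_derive_continuous (K:=R_AbsRing) (V:=R_NormedModule)).
  assert (0 < 1 + (K * sin z) ^ 2) by (pose proof (pow2_ge_0 (K * sin z)); lra).
  auto_derive. replace (1 + K * sin z * (K * sin z * 1)) with (1 + (K * sin z) ^ 2) by ring.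
  split; [lra|split; [|exact I]]. apply Rgt_not_eq, sqrt_lt_R0; auto.
Qed.

Lemma inv_mul_cancel_aux (r K : R) : K <> 0 -> r = / K * (K * r).
Proof. intros; field; auto. Qed.

Lemma C1_ext g k : C1 g -> (forall x, g x = k x) -> C1 k.
Proof.
  intros [H1 H2] E. split.
  - intros x. destruct (H1 x) as [l Hl]. exists l. eapply is_derive_ext; [|exact Hl]. auto.
  - intros x. apply (continuous_ext (Derive g)); auto. intros; apply Derive_ext; auto.
Qed.

Lemma lemmaF Y : 0 < Y -> atan (sinh Y) <= RInt phi 0 Y.
Proof.
  intros HY. set (K := sinh Y). assert (HK : 0 < K) by (apply sinh_pos; auto).
  set (h s := ff (K * s)).
  assert (Ch : C1 h).
  { apply (C1_ext (fun s => ff (K * s + 0))). apply (C1_comp ff (fun s => K * s + 0) C1_ff (C1_lin K 0)).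
    intros; unfold h; f_equal; ring. }
  destruct Ch as [Hd Hc].
  pose proof (sphere_identity h Hd Hc) as SI.
  pose proof ff_cont as Cff. pose proof PI_RGT_0 as HPI.
  assert (L : 2 * PI * (2 * atan K / K) <=
     RInt (fun th => RInt (fun t => sin th * h (sin th * sin t)) 0 (2 * PI)) 0 PI).
  { rewrite <- int_sin_sqrt; auto.
    rewrite <- (RInt_scal (V:=R_CompleteNormedModule)).
    2:{ apply (ex_RInt_continuous (V:=R_CompleteNormedModule)). intros z _. apply cont_sin_sqrt. }
    apply RInt_le; [lra| | |].
    - apply (ex_RInt_continuous (V:=R_CompleteNormedModule)). intros z _.
      apply (continuous_ext (fun th => 2 * PI * (sin th / sqrt (1 + (K * sin th) ^ 2)))); [intros; reflexivity|].
      apply (continuous_mult (K:=R_AbsRing)); [apply continuous_const| apply cont_sin_sqrt].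
    - apply (ex_RInt_continuous (V:=R_CompleteNormedModule)). intros z _.
      apply (UC_RInt_cont_x (fun x y t => sin x * ff (K * (sin x * sin t))) 0 (2 * PI) z 0); [|lra].
      solve_uc.
    - intros th Hth. change (2 * PI * (sin th / sqrt (1 + (K * sin th) ^ 2)) <=
         RInt (fun t => sin th * h (sin th * sin t)) 0 (2 * PI)).
      rewrite (RInt_ext _ (fun t => scal (sin th) (ff ((K * sin th) * sin t)))).
      2:{ intros; unfold h; unfold scal; simpl; unfold mult; simpl. f_equal; f_equal; ring. }
      rewrite (RInt_scal (V:=R_CompleteNormedModule)); [|apply exRInt_ffs].
      change (2 * PI * (sin th / sqrt (1 + (K * sin th) ^ 2)) <=
         sin th * RInt (fun t => ff (K * sin th * sin t)) 0 (2 * PI)).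
      pose proof (inner_ge (K * sin th)). pose proof (sin_ge_0 th ltac:(lra) ltac:(lra)).
      replace (2 * PI * (sin th / sqrt (1 + (K * sin th) ^ 2))) with
        (sin th * (2 * PI / sqrt (1 + (K * sin th) ^ 2))) by (unfold Rdiv; ring).
      apply Rmult_le_compat_l; auto. }
  assert (R : RInt (fun th => RInt (fun t => sin th * h (- cos th)) 0 (2 * PI)) 0 PI =
              2 * PI * (/ K * (2 * RInt phi 0 Y))).
  { rewrite (RInt_ext _ (fun th => scal (2 * PI) (sin th * ff (K * - cos th)))).
    2:{ intros; rewrite RInt_const. unfold h. change ((2 * PI - 0) * (sin x * ff (K * - cos x)) =
          2 * PI * (sin x * ff (K * - cos x))). ring. }
    rewrite (RInt_scal (V:=R_CompleteNormedModule)).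
    2:{ apply (ex_RInt_continuous (V:=R_CompleteNormedModule)). intros z _.
        apply (continuous_mult (K:=R_AbsRing)).
        - apply (ex_derive_continuous (K:=R_AbsRing) (V:=R_NormedModule)). auto_derive; auto.
        - apply (continuous_comp (fun th => K * - cos th) ff); auto.
          apply (ex_derive_continuous (K:=R_AbsRing) (V:=R_NormedModule)). auto_derive; auto. }
    change (2 * PI * RInt (fun th => sin th * ff (K * - cos th)) 0 PI = 2 * PI * (/ K * (2 * RInt phi 0 Y))).
    f_equal. rewrite <- int_sym, <- int_ff_phi. fold K.
    assert (E : RInt (fun th => scal (K * sin th) (ff (K * - cos th))) 0 PI = RInt ff (- K) K).
    { rewrite (RInt_comp ff (fun th => K * - cos th) (fun th => K * sin th)).
      - rewrite cos_0, cos_PI. f_equal; ring.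
      - intros; auto.
      - intros; split.
        + auto_derive; auto. ring.
        + apply (ex_derive_continuous (K:=R_AbsRing) (V:=R_NormedModule)). auto_derive; auto. }
    rewrite <- E. rewrite (RInt_ext (fun th => scal (K * sin th) (ff (K * - cos th))) (fun th => scal K (sin th * ff (K * - cos th)))).
    2:{ intros. change (K * sin x * ff (K * - cos x) = K * (sin x * ff (K * - cos x))). ring. }
    rewrite (RInt_scal (V:=R_CompleteNormedModule)).
    - change (RInt (fun th => sin th * ff (K * - cos th)) 0 PI = / K * (K * RInt (fun th => sin th * ff (K * - cos th)) 0 PI)).
      apply inv_mul_cancel_aux. lra.
    - apply (ex_RInt_continuous (V:=R_CompleteNormedModule)). intros z _.
      apply (continuous_mult (K:=R_AbsRing)).
      + apply (ex_derive_continuous (K:=R_AbsRing) (V:=R_NormedModule)). auto_derive; auto.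
      + apply (continuous_comp (fun th => K * - cos th) ff); auto.
        apply (ex_derive_continuous (K:=R_AbsRing) (V:=R_NormedModule)). auto_derive; auto. }
  rewrite SI, R in L.
  apply Rmult_le_reg_l with (4 * PI / K).
  - apply Rdiv_lt_0_compat; lra.
  - replace (4 * PI / K * atan K) with (2 * PI * (2 * atan K / K)) by (field; lra).
    replace (4 * PI / K * RInt phi 0 Y) with (2 * PI * (/ K * (2 * RInt phi 0 Y))) by (field; lra).
    exact L.
Qed.

End LemF.

Lemma sys_le beta phi : systole_is beta phi (Finite PI) ->
  forall cx cy, noncontractible_lift beta cx cy -> PI <= conf_length phi cx cy.
Proof.
  intros [Hlb _] cx cy Hn. apply (Hlb (conf_length phi cx cy)). exists cx, cy; split; auto.
Qed.

Lemma C1_C1_curve cx cy : C1 cx -> C1 cy -> C1_curve cx cy.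
Proof. intros [A B] [C D] t. auto. Qed.

Lemma C1_const c : C1 (fun _ => c).
Proof.
  split.
  - intros; auto_derive; auto.
  - intros x. apply (continuous_ext (fun _ => 0)); [intros; symmetry; apply Derive_const|apply continuous_const].
Qed.

Lemma C1_sin : C1 sin.
Proof.
  split.
  - intros x; eexists; apply is_derive_sin.
  - intros x. apply (continuous_ext cos).
    + intros; symmetry; apply is_derive_unique, is_derive_sin.
    + apply continuity_pt_filterlim, continuity_cos.
Qed.

Lemma C1_scale a : C1 (fun t => a * t).
Proof. apply (C1_ext (fun t => a * t + 0)); [apply C1_lin| intros; ring]. Qed.

Section Main.
Variable beta : R.
Variable phi : R -> R.
Hypothesis Hb : 0 < beta.
Hypothesis Hinv : H_invariant_factor beta phi.
Hypothesis Hsys : systole_is beta phi (Finite PI).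

Lemma phi_C1 : C1 phi.
Proof.
  destruct Hinv as [Hd _]. split.
  - intros x. exact (Hd 1%nat x).
  - intros x. apply (ex_derive_continuous (K:=R_AbsRing) (V:=R_NormedModule)). exact (Hd 2%nat x).
Qed.

Lemma phi_even y : phi y = phi (- y).
Proof. destruct Hinv as [_ [_ [H _]]]; auto. Qed.

Lemma phi_per y : phi y = phi (y + 2 * beta).
Proof. destruct Hinv as [_ [_ [_ H]]]; auto. Qed.

Lemma curveA k : PI <= conf_length phi (fun t => PI * t) (fun t => arcsinh (k * sin (PI * t))).
Proof.
  apply (sys_le beta); auto. split.
  - apply C1_C1_curve; [apply C1_scale|].
    apply (C1_comp arcsinh); [apply C1_arcsinh|].
    apply C1_mult; [apply C1_const|]. apply (C1_comp sin); [apply C1_sin|apply C1_scale].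
  - exists (fun p => genA p). split; [exact (Gamma_A beta _ (Gamma_id beta))|]. split.
    + exists (0, 0). unfold genA; simpl. intros H. injection H. intros. pose proof PI_RGT_0. lra.
    + unfold genA; simpl. rewrite Rmult_1_r, Rmult_0_r, sin_PI, sin_0, Rmult_0_r, arcsinh_0.
      f_equal; ring.
Qed.

Lemma curveH y0 : / 2 <= phi y0.
Proof.
  assert (H : PI <= conf_length phi (fun t => 2 * PI * t) (fun _ => y0)).
  { apply (sys_le beta); auto. split.
    - apply C1_C1_curve; [apply C1_scale|apply C1_const].
    - exists (fun p => genA (genA p)). split; [exact (Gamma_A beta _ (Gamma_A beta _ (Gamma_id beta)))|]. split.
      + exists (0, 0). unfold genA; simpl. intros H. injection H. intros. pose proof PI_RGT_0. lra.
      + unfold genA; simpl. f_equal; ring. }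
  unfold conf_length in H.
  rewrite (RInt_ext _ (fun _ => phi y0 * (2 * PI))) in H.
  - rewrite RInt_const in H. change (scal (1 - 0) (phi y0 * (2 * PI))) with ((1 - 0) * (phi y0 * (2 * PI))) in H.
    pose proof PI_RGT_0. nra.
  - intros t _. rewrite Derive_const.
    replace (Derive (fun t => 2 * PI * t) t) with (2 * PI).
    + f_equal. replace ((2 * PI) ^ 2 + 0 ^ 2) with ((2 * PI) ^ 2) by ring.
      apply sqrt_pow2. pose proof PI_RGT_0; lra.
    + symmetry; apply is_derive_unique; auto_derive; auto; ring.
Qed.


Lemma phi_cont' : forall x, continuous phi x.
Proof. apply C1_cont, phi_C1. Qed.

Lemma exRInt_phi' a b : ex_RInt phi a b.
Proof. apply (ex_RInt_continuous (V:=R_CompleteNormedModule)). intros; apply phi_cont'. Qed.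

Lemma int_4beta : RInt phi 0 (4 * beta) = 4 * RInt phi 0 beta.
Proof.
  assert (E1 : RInt phi (2 * beta) (4 * beta) = RInt phi 0 (2 * beta)).
  { replace (2 * beta) with (1 * 0 + 2 * beta) at 1 by ring.
    replace (4 * beta) with (1 * (2 * beta) + 2 * beta) by ring.
    rewrite <- (RInt_comp_lin (V:=R_CompleteNormedModule)); [|apply exRInt_phi'].
    apply RInt_ext; intros. change (1 * phi (1 * x + 2 * beta) = phi x).
    rewrite (phi_per x), Rmult_1_l. f_equal; ring. }
  assert (E2 : RInt phi beta (2 * beta) = RInt phi 0 beta).
  { rewrite <- (opp_RInt_swap (V:=R_CompleteNormedModule)); [|apply exRInt_phi'].
    assert (C : RInt phi (2 * beta) beta = RInt (fun y => scal (-1) (phi (-1 * y + 2 * beta))) 0 beta).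
    { rewrite (RInt_comp_lin (V:=R_CompleteNormedModule)); [|apply exRInt_phi']. f_equal; ring. }
    rewrite C.
    rewrite (RInt_scal (V:=R_CompleteNormedModule)).
    - change (- (-1 * RInt (fun y => phi (-1 * y + 2 * beta)) 0 beta) = RInt phi 0 beta).
      assert (E : forall x : R, - (-1 * x) = x) by (intros; ring). rewrite E.
      apply RInt_ext; intros. rewrite (phi_even x), (phi_per (- x)). f_equal; ring.
    - apply (ex_RInt_continuous (V:=R_CompleteNormedModule)). intros.
      apply (continuous_comp (fun y => -1 * y + 2 * beta) phi); [|apply phi_cont'].
      apply (ex_derive_continuous (K:=R_AbsRing) (V:=R_NormedModule)). auto_derive; auto. }
  rewrite <- (RInt_Chasles (V:=R_CompleteNormedModule) _ 0 (2 * beta) (4 * beta)); try apply exRInt_phi'.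
  rewrite <- (RInt_Chasles (V:=R_CompleteNormedModule) _ 0 beta (2 * beta)); try apply exRInt_phi'.
  unfold plus; simpl. rewrite E1.
  rewrite <- (RInt_Chasles (V:=R_CompleteNormedModule) _ 0 beta (2 * beta)); try apply exRInt_phi'.
  unfold plus; simpl. rewrite E2. ring.
Qed.

Lemma curveV : PI / 4 <= RInt phi 0 beta.
Proof.
  assert (H : PI <= conf_length phi (fun _ => 0) (fun t => 4 * beta * t)).
  { apply (sys_le beta); auto. split.
    - apply C1_C1_curve; [apply C1_const|apply C1_scale].
    - exists (fun p => genB beta p). split; [exact (Gamma_B beta _ (Gamma_id beta))|]. split.
      + exists (0, 0). unfold genB; simpl. intros H. injection H. intros. lra.
      + unfold genB; simpl. f_equal; ring. }
  unfold conf_length in H.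
  rewrite (RInt_ext _ (fun t => scal (4 * beta) (phi (4 * beta * t + 0)))) in H.
  - rewrite (RInt_comp_lin (V:=R_CompleteNormedModule)) in H; [|apply exRInt_phi'].
    replace (4 * beta * 0 + 0) with 0 in H by ring. replace (4 * beta * 1 + 0) with (4 * beta) in H by ring.
    rewrite int_4beta in H. lra.
  - intros t _. rewrite Derive_const.
    replace (Derive (fun t => 4 * beta * t) t) with (4 * beta).
    + change (phi (4 * beta * t) * sqrt (0 ^ 2 + (4 * beta) ^ 2) = 4 * beta * phi (4 * beta * t + 0)).
      replace (0 ^ 2 + (4 * beta) ^ 2) with ((4 * beta) ^ 2) by ring.
      rewrite sqrt_pow2 by lra. rewrite Rplus_0_r. ring.
    + symmetry; apply is_derive_unique; auto_derive; auto; ring.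
Qed.

End Main.

Lemma exp2 y : exp (2 * y) = exp y * exp y.
Proof. rewrite <- exp_plus. f_equal; ring. Qed.

Lemma phi0_cosh y : phi0 y = / cosh y.
Proof.
  unfold phi0, cosh. rewrite exp2, exp_Ropp. pose proof (exp_pos y). field. split; apply Rgt_not_eq; nra.
Qed.

Lemma phi0_pos y : 0 < phi0 y.
Proof. rewrite phi0_cosh. apply Rinv_0_lt_compat, cosh_pos. Qed.



Lemma gd_der y : is_derive (fun y => atan (sinh y)) y (phi0 y).
Proof.
  pose proof (is_derive_comp atan sinh y _ _ (atan_der _) (sinh_der y)) as H.
  replace (phi0 y) with (scal (cosh y) (/ (1 + sinh y ^ 2))); auto.
  unfold scal; simpl; unfold mult; simpl. rewrite phi0_cosh.
  pose proof (cosh_sinh y). pose proof (cosh_pos y).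
  replace (1 + sinh y * (sinh y * 1)) with (cosh y * cosh y) by lra. field. lra.
Qed.

Lemma phi0_der y : is_derive phi0 y (2 * exp y * (1 - exp (2 * y)) / (1 + exp (2 * y)) ^ 2).
Proof.
  unfold phi0. pose proof (exp_pos (2 * y)). auto_derive.
  - lra.
  - field. lra.
Qed.

Lemma C1_phi0 : C1 phi0.
Proof.
  split.
  - intros; eexists; apply phi0_der.
  - intros x. apply (continuous_ext (fun y => 2 * exp y * (1 - exp (2 * y)) / (1 + exp (2 * y)) ^ 2)).
    + intros; symmetry; apply is_derive_unique, phi0_der.
    + apply (ex_derive_continuous (K:=R_AbsRing) (V:=R_NormedModule)).
      pose proof (exp_pos (2 * x)). auto_derive. apply Rgt_not_eq; nra.
Qed.

Lemma phi0_dec y : 0 <= y -> Derive phi0 y <= 0.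
Proof.
  intros Hy. rewrite (is_derive_unique _ _ _ (phi0_der y)).
  assert (1 <= exp (2 * y)) by (pose proof (exp_ineq1_le (2 * y)); lra).
  pose proof (exp_pos y). pose proof (exp_pos (2 * y)).
  assert (0 < / (1 + exp (2 * y)) ^ 2) by (apply Rinv_0_lt_compat, pow_lt; lra).
  unfold Rdiv. assert (2 * exp y * (1 - exp (2 * y)) <= 0) by nra.
  set (A := 2 * exp y * (1 - exp (2 * y))) in *. set (B := / (1 + exp (2 * y)) ^ 2) in *. nra.
Qed.

Lemma int_phi0 a : RInt phi0 0 a = atan (sinh a).
Proof.
  assert (H : is_RInt phi0 0 a (minus (atan (sinh a)) (atan (sinh 0)))).
  { apply (is_RInt_derive (V:=R_CompleteNormedModule) (fun y => atan (sinh y))).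
    - intros; apply gd_der.
    - intros; apply C1_cont, C1_phi0. }
  apply (is_RInt_unique (V:=R_CompleteNormedModule)) in H. rewrite H.
  replace (sinh 0) with 0 by (unfold sinh; rewrite Ropp_0; field).
  rewrite atan_0. unfold minus, plus, opp; simpl. ring.
Qed.

Section ByParts.
Variable phi : R -> R.
Hypothesis Hphi : C1 phi.
Hypothesis HF : forall y, 0 < y -> atan (sinh y) <= RInt phi 0 y.

Let D y := RInt phi 0 y - atan (sinh y).

Lemma D_der y : is_derive D y (phi y - phi0 y).
Proof.
  assert (H1 : is_derive (fun y => RInt phi 0 y) y (phi y)).
  { apply (is_derive_RInt phi (fun y => RInt phi 0 y) 0).
    + apply filter_forall. intros b. apply (RInt_correct (V:=R_CompleteNormedModule)).
      apply (ex_RInt_continuous (V:=R_CompleteNormedModule)). intros; apply C1_cont; auto.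
    + apply C1_cont; auto. }
  pose proof (is_derive_minus _ _ y _ _ H1 (gd_der y)) as H2.
  unfold D. eapply is_derive_ext; [|exact H2]. intros; reflexivity.
Qed.

Lemma D_nn y : 0 <= y -> 0 <= D y.
Proof.
  intros [Hy|Hy].
  - unfold D. pose proof (HF y Hy). lra.
  - subst. unfold D. rewrite RInt_point. replace (sinh 0) with 0 by (unfold sinh; rewrite Ropp_0; field).
    rewrite atan_0. change (0 <= 0 - 0). lra.
Qed.

Lemma byparts w Y : 0 <= Y -> C1 w -> (forall y, 0 <= y <= Y -> Derive w y <= 0) -> 0 <= w Y ->
  0 <= RInt (fun y => (phi y - phi0 y) * w y) 0 Y.
Proof.
  intros HY Cw Hw' HwY.
  assert (CD : forall y, continuous D y).
  { intros; apply (ex_derive_continuous (K:=R_AbsRing) (V:=R_NormedModule)). eexists; apply D_der. }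
  assert (Cw0 := C1_cont w Cw). destruct Cw as [Dw Cw'].
  assert (C1f : forall y, continuous (fun y => (phi y - phi0 y) * w y) y).
  { intros y. apply (continuous_mult (K:=R_AbsRing)); auto.
    apply (continuous_minus (V:=R_NormedModule)); apply C1_cont; auto; apply C1_phi0. }
  assert (C2f : forall y, continuous (fun y => D y * Derive w y) y).
  { intros y. apply (continuous_mult (K:=R_AbsRing)); auto. }
  assert (H : is_RInt (fun y => (phi y - phi0 y) * w y + D y * Derive w y) 0 Y (minus (D Y * w Y) (D 0 * w 0))).
  { apply (is_RInt_derive (V:=R_CompleteNormedModule) (fun y => D y * w y)).
    - intros y _.
      pose proof (is_derive_mult (K:=R_AbsRing) D w y _ _ (D_der y) (Derive_correct w y (Dw y)) Rmult_comm) as HM.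
      exact HM.
    - intros y _. apply (continuous_plus (V:=R_NormedModule)); auto. }
  assert (E1 : ex_RInt (fun y => (phi y - phi0 y) * w y) 0 Y)
    by (apply (ex_RInt_continuous (V:=R_CompleteNormedModule)); intros; auto).
  assert (E2 : ex_RInt (fun y => D y * Derive w y) 0 Y)
    by (apply (ex_RInt_continuous (V:=R_CompleteNormedModule)); intros; auto).
  apply (is_RInt_unique (V:=R_CompleteNormedModule)) in H.
  rewrite (RInt_plus (V:=R_CompleteNormedModule) (fun y => (phi y - phi0 y) * w y) (fun y => D y * Derive w y)) in H; auto.
  assert (N : RInt (fun y => D y * Derive w y) 0 Y <= 0).
  { assert (Z : RInt (fun _ => 0) 0 Y = 0).
    { rewrite RInt_const. change ((Y - 0) * 0 = 0). ring. }
    apply Rle_trans with (RInt (fun _ => 0) 0 Y); [|rewrite Z; lra]. apply RInt_le; auto.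
    - apply (ex_RInt_continuous (V:=R_CompleteNormedModule)); intros; apply continuous_const.
    - intros y Hy. pose proof (D_nn y ltac:(lra)). pose proof (Hw' y ltac:(lra)). nra. }
  pose proof (D_nn Y HY). pose proof (D_nn 0 ltac:(lra)).
  unfold minus, plus, opp in H; simpl in H.
  change (RInt (fun y => (phi y - phi0 y) * w y) 0 Y + RInt (fun y => D y * Derive w y) 0 Y =
          D Y * w Y + - (D 0 * w 0)) in H.
  assert (D 0 = 0).
  { unfold D. rewrite RInt_point. replace (sinh 0) with 0 by (unfold sinh; rewrite Ropp_0; field).
    rewrite atan_0. change (0 - 0 = 0). ring. }
  rewrite H2 in H. nra.
Qed.

End ByParts.

Ltac rring := match goal with |- @eq _ ?a ?b => change (@eq R a b); ring end.

Lemma exc (f : R -> R) a b : (forall x, continuous f x) -> ex_RInt (V:=R_CompleteNormedModule) f a b.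
Proof. intros; apply (ex_RInt_continuous (V:=R_CompleteNormedModule)); intros; auto. Qed.

Lemma RI_plus (f g : R -> R) a b : (forall x, continuous f x) -> (forall x, continuous g x) ->
  RInt (fun x => f x + g x) a b = RInt f a b + RInt g a b.
Proof. intros. apply (RInt_plus (V:=R_CompleteNormedModule)); apply exc; auto. Qed.

Lemma RI_minus (f g : R -> R) a b : (forall x, continuous f x) -> (forall x, continuous g x) ->
  RInt (fun x => f x - g x) a b = RInt f a b - RInt g a b.
Proof. intros. apply (RInt_minus (V:=R_CompleteNormedModule)); apply exc; auto. Qed.

Lemma RI_scal (f : R -> R) c a b : (forall x, continuous f x) ->
  RInt (fun x => c * f x) a b = c * RInt f a b.
Proof. intros. apply (RInt_scal (V:=R_CompleteNormedModule)); apply exc; auto. Qed.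

Lemma RI_const c a b : RInt (fun _ => c) a b = (b - a) * c.
Proof. rewrite RInt_const. reflexivity. Qed.

Lemma cmult (f g : R -> R) : (forall x, continuous f x) -> (forall x, continuous g x) -> forall x : R, continuous (fun y => f y * g y) x.
Proof. intros; apply (continuous_mult (K:=R_AbsRing)); auto. Qed.

Lemma ccst (c : R) : forall x : R, continuous (fun _ : R => c) x.
Proof. intros; apply continuous_const. Qed.

Lemma phi0_cont : forall x, continuous phi0 x.
Proof. apply C1_cont, C1_phi0. Qed.

Lemma sinh_lt x y : x < y -> sinh x < sinh y.
Proof.
  intros H. unfold sinh. pose proof (exp_increasing _ _ H).
  pose proof (exp_increasing (- y) (- x) ltac:(lra)). lra.
Qed.

Lemma sinh_beta0 : sinh beta0 = 1.
Proof.
  unfold sinh, beta0. rewrite exp_Ropp.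
  assert (0 < 1 + sqrt 2) by (pose proof (sqrt_pos 2); lra).
  rewrite exp_ln by auto. pose proof (sqrt_sqrt 2 ltac:(lra)). field_simplify_eq; [|lra]. nra.
Qed.

Lemma beta1_pos : 0 < beta1.
Proof.
  unfold beta1. rewrite <- ln_1. apply ln_increasing; [lra|]. pose proof (sqrt_pos 3); lra.
Qed.

Lemma phi0_0 : phi0 0 = 1.
Proof. unfold phi0. rewrite Rmult_0_r, exp_0. field. Qed.

Lemma s_beta_spec beta : PI / 4 < beta -> beta < beta0 ->
  0 < s_beta beta < beta /\ RInt phi0 0 (s_beta beta) + (beta - s_beta beta) * phi0 (s_beta beta) = PI / 4.
Proof.
  intros H1 H2. unfold s_beta. apply epsilon_spec.
  set (g s := - (atan (sinh s) + (beta - s) * phi0 s - PI / 4)).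
  assert (Cg : continuity g).
  { intros x. apply continuity_pt_filterlim.
    apply (ex_derive_continuous (K:=R_AbsRing) (V:=R_NormedModule)). unfold g.
    assert (D1 : is_derive (fun s => atan (sinh s)) x (phi0 x)) by apply gd_der.
    assert (D2 : is_derive (fun s => beta - s) x (-1)) by (auto_derive; auto; ring).
    pose proof (is_derive_mult (K:=R_AbsRing) _ _ x _ _ D2 (phi0_der x) Rmult_comm) as D3.
    pose proof (is_derive_plus _ _ x _ _ D1 D3) as D4.
    assert (D5 : is_derive (fun _ : R => PI / 4) x 0) by (auto_derive; auto).
    pose proof (is_derive_minus _ _ x _ _ D4 D5) as D6.
    pose proof (is_derive_opp _ x _ D6) as D7.
    eexists. eapply is_derive_ext; [|exact D7]. intros; reflexivity. }
  assert (g0 : g 0 < 0).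
  { unfold g. rewrite phi0_0. replace (sinh 0) with 0 by (unfold sinh; rewrite Ropp_0; field).
    rewrite atan_0. lra. }
  assert (gb : 0 < g beta).
  { unfold g. assert (sinh beta < 1) by (rewrite <- sinh_beta0; apply sinh_lt; auto).
    pose proof (atan_increasing _ _ H). rewrite atan_1 in H0.
    pose proof (phi0_pos beta). lra. }
  assert (Hb : 0 < beta) by (pose proof PI_RGT_0; lra).
  destruct (IVT g 0 beta Cg Hb g0 gb) as [z [Hz Hgz]].
  exists z. assert (z <> 0) by (intros ->; lra). assert (z <> beta) by (intros ->; lra).
  split; [lra|]. rewrite int_phi0. unfold g in Hgz. lra.
Qed.

Lemma C1_sub_const g c : C1 g -> C1 (fun y => g y - c).
Proof.
  intros Hg. apply (C1_ext (fun y => 1 * g y + - c)).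
  - apply (C1_comp (fun z => 1 * z + - c) g (C1_lin 1 (- c)) Hg).
  - intros; ring.
Qed.

Lemma Derive_sub_const g c y : ex_derive g y -> Derive (fun y => g y - c) y = Derive g y.
Proof.
  intros H. apply is_derive_unique.
  pose proof (is_derive_minus g (fun _ => c) y _ _ (Derive_correct g y H) (is_derive_const c y)) as H2.
  replace (Derive g y) with (minus (Derive g y) zero).
  - eapply is_derive_ext; [|exact H2]. intros; reflexivity.
  - unfold minus, plus, opp, zero; simpl. ring.
Qed.

Section Final.
Variable beta : R.
Variable phi : R -> R.
Hypothesis Hb : 0 < beta.
Hypothesis Hinv : H_invariant_factor beta phi.
Hypothesis Hsys : systole_is beta phi (Finite PI).

Let Cphi := phi_C1 beta phi Hinv.
Let HF := lemmaF phi Cphi (phi_even beta phi Hinv) (curveA beta phi Hsys).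
Let Hh := curveH beta phi Hsys.
Let Hv := curveV beta phi Hb Hinv Hsys.
Let pc : forall x, continuous phi x := C1_cont phi Cphi.

Lemma BP w Y : 0 <= Y -> C1 w -> (forall y, 0 <= y <= Y -> Derive w y <= 0) -> 0 <= w Y ->
  RInt (fun y => phi0 y * w y) 0 Y <= RInt (fun y => phi y * w y) 0 Y.
Proof.
  intros. pose proof (byparts phi Cphi HF w Y H H0 H1 H2).
  pose proof (C1_cont w H0).
  rewrite (RInt_ext _ (fun y => phi y * w y - phi0 y * w y)) in H3 by (intros; rring).
  rewrite RI_minus in H3; try apply cmult; auto; try apply phi0_cont. lra.
Qed.

Lemma case_phi0 Y : 0 <= Y -> RInt (fun y => phi0 y ^ 2) 0 Y <= RInt (fun y => phi y * phi0 y) 0 Y.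
Proof.
  intros HY. rewrite (RInt_ext _ (fun y => phi0 y * phi0 y)) by (intros; rring).
  apply BP; auto.
  - apply C1_phi0.
  - intros; apply phi0_dec; lra.
  - left; apply phi0_pos.
Qed.


Lemma main_aux : RInt (fun y => phi y * phi_beta beta y) 0 beta >=
  RInt (fun y => (phi_beta beta y) ^ 2) 0 beta.
Proof.
  pose proof PI_RGT_0 as HPI.
  unfold phi_beta.
  destruct (Rle_dec beta (PI / 4)) as [C1|C1].
  {
    set (c := PI / (4 * beta)).
    assert (Hc : 0 < c) by (unfold c; apply Rdiv_lt_0_compat; lra).
    rewrite (RInt_ext _ (fun y => c * phi y)) by (intros; rring).
    rewrite RI_scal by auto. rewrite RI_const.
    assert (c * beta = PI / 4) by (unfold c; field; lra).
    apply Rle_ge. nra. }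
  destruct (Rlt_dec beta beta0) as [C2|C2].
  {
    destruct (s_beta_spec beta ltac:(lra) C2) as [[Hs0 Hs1] Hs].
    set (s := s_beta beta) in *. set (c0 := phi0 s) in *.
    assert (Hc0 : 0 < c0) by apply phi0_pos.
    set (w := fun y => if Rle_dec y s then phi0 y else c0).
    change (RInt (fun y => phi y * w y) 0 beta >= RInt (fun y => w y ^ 2) 0 beta).
    assert (L1 : forall x, 0 < x < s -> w x = phi0 x).
    { intros x Hx. unfold w. destruct (Rle_dec x s); auto; lra. }
    assert (L2 : forall x, s < x < beta -> w x = c0).
    { intros x Hx. unfold w. destruct (Rle_dec x s); auto; lra. }
    assert (EA : ex_RInt (fun y => phi y * w y) 0 s).
    { apply (ex_RInt_ext (fun y => phi y * phi0 y)).
      - intros x Hx. rewrite Rmin_left, Rmax_right in Hx by lra. rewrite L1; auto.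
      - apply exc, cmult; auto; apply phi0_cont. }
    assert (EB : ex_RInt (fun y => phi y * w y) s beta).
    { apply (ex_RInt_ext (fun y => c0 * phi y)).
      - intros x Hx. rewrite Rmin_left, Rmax_right in Hx by lra. rewrite L2; auto. rring.
      - apply exc, cmult; auto; apply ccst. }
    assert (EC : ex_RInt (fun y => w y ^ 2) 0 s).
    { apply (ex_RInt_ext (fun y => phi0 y * phi0 y)).
      - intros x Hx. rewrite Rmin_left, Rmax_right in Hx by lra. rewrite L1; auto. rring.
      - apply exc, cmult; apply phi0_cont. }
    assert (ED : ex_RInt (fun y => w y ^ 2) s beta).
    { apply (ex_RInt_ext (fun _ => c0 * c0)).
      - intros x Hx. rewrite Rmin_left, Rmax_right in Hx by lra. rewrite L2; auto. rring.
      - apply exc, ccst. }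
    rewrite <- (RInt_Chasles (V:=R_CompleteNormedModule) (fun y => phi y * w y) 0 s beta EA EB).
    rewrite <- (RInt_Chasles (V:=R_CompleteNormedModule) (fun y => w y ^ 2) 0 s beta EC ED).
    rewrite (RInt_ext (fun y => phi y * w y) (fun y => phi y * phi0 y) 0 s)
      by (intros x Hx; rewrite Rmin_left, Rmax_right in Hx by lra; rewrite L1; auto).
    rewrite (RInt_ext (fun y => phi y * w y) (fun y => c0 * phi y) s beta)
      by (intros x Hx; rewrite Rmin_left, Rmax_right in Hx by lra; rewrite L2; auto; rring).
    rewrite (RInt_ext (fun y => w y ^ 2) (fun y => phi0 y * phi0 y) 0 s)
      by (intros x Hx; rewrite Rmin_left, Rmax_right in Hx by lra; rewrite L1; auto; rring).
    rewrite (RInt_ext (fun y => w y ^ 2) (fun _ => c0 * c0) s beta)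
      by (intros x Hx; rewrite Rmin_left, Rmax_right in Hx by lra; rewrite L2; auto; rring).
    unfold plus; simpl.
    rewrite RI_scal by auto. rewrite RI_const.
    assert (B := BP (fun y => phi0 y - c0) s ltac:(lra) (C1_sub_const phi0 c0 C1_phi0)).
    assert (B' : RInt (fun y => phi0 y * (phi0 y - c0)) 0 s <= RInt (fun y => phi y * (phi0 y - c0)) 0 s).
    { apply B.
      - intros y Hy. rewrite Derive_sub_const; [apply phi0_dec; lra|]. eexists; apply phi0_der.
      - unfold c0; lra. }
    clear B.
    rewrite (RInt_ext _ (fun y => phi0 y * phi0 y - c0 * phi0 y)) in B' by (intros; rring).
    rewrite (RInt_ext (fun y => phi y * (phi0 y - c0)) (fun y => phi y * phi0 y - c0 * phi y)) in B' by (intros; rring).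
    rewrite !RI_minus in B'; try apply cmult; auto; try apply phi0_cont; try apply ccst.
    rewrite !RI_scal in B'; auto; try apply phi0_cont.
    assert (V : RInt phi 0 s + RInt phi s beta >= PI / 4).
    { pose proof (RInt_Chasles (V:=R_CompleteNormedModule) phi 0 s beta (exc _ _ _ pc) (exc _ _ _ pc)).
      unfold plus in H; simpl in H. change (RInt phi 0 s + RInt phi s beta = RInt phi 0 beta) in H. lra. }
    rewrite <- Hs in V.
    apply Rle_ge.
    assert (c0 * (RInt phi 0 s + RInt phi s beta) >= c0 * (RInt phi0 0 s + (beta - s) * c0)) by
      (apply Rle_ge, Rmult_le_compat_l; lra).
    nra. }
  destruct (Rle_dec beta beta1) as [C3|C3].
  { apply Rle_ge, case_phi0; lra. }
  {
    pose proof beta1_pos as Hb1.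
    set (w := fun y => if Rle_dec y beta1 then phi0 y else 1 / 2).
    change (RInt (fun y => phi y * w y) 0 beta >= RInt (fun y => w y ^ 2) 0 beta).
    assert (L1 : forall x, 0 < x < beta1 -> w x = phi0 x).
    { intros x Hx. unfold w. destruct (Rle_dec x beta1); auto; lra. }
    assert (L2 : forall x, beta1 < x < beta -> w x = 1 / 2).
    { intros x Hx. unfold w. destruct (Rle_dec x beta1); auto; lra. }
    assert (EA : ex_RInt (fun y => phi y * w y) 0 beta1).
    { apply (ex_RInt_ext (fun y => phi y * phi0 y)).
      - intros x Hx. rewrite Rmin_left, Rmax_right in Hx by lra. rewrite L1; auto.
      - apply exc, cmult; auto; apply phi0_cont. }
    assert (EB : ex_RInt (fun y => phi y * w y) beta1 beta).
    { apply (ex_RInt_ext (fun y => phi y * (1 / 2))).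
      - intros x Hx. rewrite Rmin_left, Rmax_right in Hx by lra. rewrite L2; auto.
      - apply exc, cmult; auto; apply ccst. }
    assert (EC : ex_RInt (fun y => w y ^ 2) 0 beta1).
    { apply (ex_RInt_ext (fun y => phi0 y ^ 2)).
      - intros x Hx. rewrite Rmin_left, Rmax_right in Hx by lra. rewrite L1; auto.
      - apply exc. intros; apply (continuous_ext (fun y => phi0 y * phi0 y)); [intros; rring|].
        apply cmult; apply phi0_cont. }
    assert (ED : ex_RInt (fun y => w y ^ 2) beta1 beta).
    { apply (ex_RInt_ext (fun _ => (1 / 2) ^ 2)).
      - intros x Hx. rewrite Rmin_left, Rmax_right in Hx by lra. rewrite L2; auto.
      - apply exc, ccst. }
    rewrite <- (RInt_Chasles (V:=R_CompleteNormedModule) (fun y => phi y * w y) 0 beta1 beta EA EB).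
    rewrite <- (RInt_Chasles (V:=R_CompleteNormedModule) (fun y => w y ^ 2) 0 beta1 beta EC ED).
    rewrite (RInt_ext (fun y => phi y * w y) (fun y => phi y * phi0 y) 0 beta1)
      by (intros x Hx; rewrite Rmin_left, Rmax_right in Hx by lra; rewrite L1; auto).
    rewrite (RInt_ext (fun y => phi y * w y) (fun y => phi y * (1 / 2)) beta1 beta)
      by (intros x Hx; rewrite Rmin_left, Rmax_right in Hx by lra; rewrite L2; auto).
    rewrite (RInt_ext (fun y => w y ^ 2) (fun y => phi0 y ^ 2) 0 beta1)
      by (intros x Hx; rewrite Rmin_left, Rmax_right in Hx by lra; rewrite L1; auto).
    rewrite (RInt_ext (fun y => w y ^ 2) (fun _ => (1 / 2) ^ 2) beta1 beta)
      by (intros x Hx; rewrite Rmin_left, Rmax_right in Hx by lra; rewrite L2; auto).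
    unfold plus; simpl.
    pose proof (case_phi0 beta1 ltac:(lra)).
    assert (T : RInt (fun _ => (1 / 2) ^ 2) beta1 beta <= RInt (fun y => phi y * (1 / 2)) beta1 beta).
    { apply RInt_le; [lra| apply exc, ccst | apply exc, cmult; auto; apply ccst |].
      intros x _. pose proof (Hh x). lra. }
    change (RInt (fun y => phi y * phi0 y) 0 beta1 + RInt (fun y => phi y * (1 / 2)) beta1 beta >=
            RInt (fun y => phi0 y ^ 2) 0 beta1 + RInt (fun _ => (1 / 2) ^ 2) beta1 beta).
    lra. }
Qed.

End Final.

Theorem lemma2p4 (beta : R) (phi : R -> R) :
  0 < beta ->
  H_invariant_factor beta phi ->
  systole_is beta phi (Finite PI) ->
  RInt (fun y => phi y * phi_beta beta y) 0 beta >=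
  RInt (fun y => (phi_beta beta y) ^ 2) 0 beta.
Proof. intros; apply main_aux; auto. Qed.
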